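(* The maximal adjacency cliques of $\mathcal G$ (i.e. the subsets of $\mathcal G$ consisting of mutually adjacent elements that are maximal with respect to inclusion among such subsets) are precisely the stars and the tops.
   Context: $K$ is a (not necessarily commutative) field and $V$ is a left vector space over $K$ of arbitrary (possibly infinite) dimension with $\dim V>2$. $\mathcal G:=\{X\le V\mid X\cong V/X\}$, assumed nonempty. Two elements $X,Y\in\mathcal G$ are adjacent if $\dim((X+Y)/X)=\dim((X+Y)/Y)=1$. A star is a set $\mathcal G[M\rangle:=\{E\le V\mid M\le E,\ \dim(E/M)=1\}$, where $M\le V$ is a subspace for which some $X\in\mathcal G$ satisfies $M\le X$, $\dim(X/M)=1$. A top is a set $\mathcal G\langle N]:=\{E\le V\mid E\le N,\ \dim(N/E)=1\}$, where $N\le V$ is a subspace for which some $X\in\mathcal G$ satisfies $X\le N$, $\dim(N/X)=1$. *)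

(* Defs.v *)
From HB Require Import structures.
From mathcomp Require Import all_boot all_algebra.
From mathcomp Require Import boolp classical_sets.
Set Implicit Arguments. Unset Strict Implicit. Unset Printing Implicit Defensive.
Import GRing.Theory.
Local Open Scope ring_scope.
Local Open Scope classical_set_scope.

Definition division_ring (K : unitRingType) : Prop :=
  forall x : K, x != 0 -> x \is a GRing.unit.

Section Defs.
Variables (K : unitRingType) (V : lmodType K).

Definition subspace (X : set V) : Prop :=
  X 0 /\ forall (a : K) (x y : V), X x -> X y -> X (a *: x + y).

Definition addsp (X Y : set V) : set V :=
  [set z | exists x y, X x /\ Y y /\ z = x + y].

(* M <= E and dim (E/M) = 1 : E/M is spanned by the class of one vector v
   not in M. *)
Definition codim1 (M E : set V) : Prop :=
  M `<=` E /\
  exists v, E v /\ ~ M v /\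
    forall e, E e -> exists (a : K) m, M m /\ e = a *: v + m.

(* X is isomorphic (as a left K-space) to V/X: there is a K-linear map
   x |-> [f x] from X to V/X which is injective and surjective. *)
Definition iso_to_quot (X : set V) : Prop :=
  exists f : V -> V,
    (forall (a : K) x y, X x -> X y -> f (a *: x + y) = a *: f x + f y) /\
    (forall x, X x -> X (f x) -> x = 0) /\
    (forall v, exists x, X x /\ X (f x - v)).

Definition Gset : set (set V) := [set X | subspace X /\ iso_to_quot X].

Definition adjacent (X Y : set V) : Prop :=
  codim1 X (addsp X Y) /\ codim1 Y (addsp X Y).

Definition adj_clique (C : set (set V)) : Prop :=
  C `<=` Gset /\ forall X Y, C X -> C Y -> X <> Y -> adjacent X Y.

Definition maximal_adj_clique (C : set (set V)) : Prop :=
  adj_clique C /\ forall C', adj_clique C' -> C `<=` C' -> C' = C.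

Definition star_base (M : set V) : Prop :=
  subspace M /\ exists X, Gset X /\ codim1 M X.
Definition star (M : set V) : set (set V) :=
  [set E | subspace E /\ codim1 M E].

Definition top_base (N : set V) : Prop :=
  subspace N /\ exists X, Gset X /\ codim1 X N.
Definition top (N : set V) : set (set V) :=
  [set E | subspace E /\ codim1 E N].

Definition dim_gt2 : Prop :=
  exists u v w : V, forall a b c : K,
    a *: u + b *: v + c *: w = 0 -> [/\ a = 0, b = 0 & c = 0].

End Defs.

(* Main.v *)
Require Import Defs.
From HB Require Import structures.
From mathcomp Require Import all_boot all_algebra.
From mathcomp Require Import boolp classical_sets.
Set Implicit Arguments. Unset Strict Implicit. Unset Printing Implicit Defensive.
Import GRing.Theory.
Local Open Scope ring_scope.
Local Open Scope classical_set_scope.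

Definition spanl {K : unitRingType} {V : lmodType K} (A : set V) (w : V) : set V :=
  [set z | exists c a, A a /\ z = c *: w + a].

Lemma sub0 {K : unitRingType} {V : lmodType K} (X : set V) : subspace X -> X 0.
Proof. by case. Qed.

Lemma subD {K : unitRingType} {V : lmodType K} (X : set V) x y :
  subspace X -> X x -> X y -> X (x + y).
Proof. by case=> _ h hx hy; have := h 1 x y hx hy; rewrite scale1r. Qed.

Lemma subZ {K : unitRingType} {V : lmodType K} (X : set V) a x :
  subspace X -> X x -> X (a *: x).
Proof. by case=> h0 h hx; have := h a x 0 hx h0; rewrite addr0. Qed.

Lemma subN {K : unitRingType} {V : lmodType K} (X : set V) x :
  subspace X -> X x -> X (- x).
Proof. by move=> sX hx; rewrite -scaleN1r; apply: subZ. Qed.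

Lemma subB {K : unitRingType} {V : lmodType K} (X : set V) x y :
  subspace X -> X x -> X y -> X (x - y).
Proof. by move=> sX hx hy; apply: subD => //; apply: subN. Qed.

Lemma unitP {K : unitRingType} (hK : division_ring K) (a : K) :
  a <> 0 -> a^-1 * a = 1.
Proof. by move=> /eqP h; apply: mulVr; apply: hK. Qed.

Lemma unitP' {K : unitRingType} (hK : division_ring K) (a : K) :
  a <> 0 -> a * a^-1 = 1.
Proof. by move=> /eqP h; apply: mulrV; apply: hK. Qed.

Lemma scaleK' {K : unitRingType} {V : lmodType K} (hK : division_ring K) (a : K) (v : V) :
  a <> 0 -> a^-1 *: (a *: v) = v.
Proof. by move=> h; rewrite scalerA unitP // scale1r. Qed.

Lemma spanl_sub {K : unitRingType} {V : lmodType K} (A : set V) w :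
  subspace A -> subspace (spanl A w).
Proof.
move=> sA; split.
  by exists 0, 0; split; [exact: sub0|rewrite scale0r addr0].
move=> a x y [c [m [Am ->]]] [c' [m' [Am' ->]]].
exists (a * c + c'), (a *: m + m'); split; first by case: sA => _; apply.
by rewrite scalerDr scalerDl scalerA !addrA; congr (_ + _); rewrite addrAC.
Qed.

Lemma spanl_in {K : unitRingType} {V : lmodType K} (A : set V) w a :
  subspace A -> A a -> spanl A w a.
Proof. by move=> sA Aa; exists 0, a; rewrite scale0r add0r. Qed.

Lemma spanl_w {K : unitRingType} {V : lmodType K} (A : set V) w :
  subspace A -> spanl A w w.
Proof. by move=> sA; exists 1, 0; rewrite scale1r addr0; split=> //; exact: sub0. Qed.

Lemma codim1_spanl {K : unitRingType} {V : lmodType K} (A : set V) w :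
  subspace A -> ~ A w -> codim1 A (spanl A w).
Proof.
move=> sA nAw; split; first by move=> a; apply: spanl_in.
by exists w; split; [exact: spanl_w|split=> // e [c [m [Am ->]]]; exists c, m].
Qed.

Lemma codim1_span {K : unitRingType} {V : lmodType K} (hK : division_ring K)
  (Y S : set V) p q :
  subspace Y -> codim1 Y S -> S p -> ~ Y p -> S q -> spanl Y p q.
Proof.
move=> sY [YS [v [Sv [nYv Hv]]]] Sp nYp Sq.
have [a [m [Ym ep]]] := Hv p Sp.
have [b [m' [Ym' ->]]] := Hv q Sq.
have a0 : a <> 0 by move=> a0; apply: nYp; rewrite ep a0 scale0r add0r.
exists (b * a^-1), (m' - (b * a^-1) *: m); split.
  by apply: subB => //; apply: subZ.
rewrite ep scalerDr scalerA -mulrA unitP // mulr1 -addrA.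
by congr (_ + _); rewrite addrC subrK.
Qed.


Definition ind {K : unitRingType} {V : lmodType K} (u v w : V) :=
  forall a b c : K, a *: u + b *: v + c *: w = 0 -> [/\ a = 0, b = 0 & c = 0].

Lemma indP12 {K : unitRingType} {V : lmodType K} (u v w : V) : ind u v w -> ind v u w.
Proof. by move=> h a b c e; have [] := h b a c; [rewrite (addrC (b *: u))|]. Qed.

Lemma indP23 {K : unitRingType} {V : lmodType K} (u v w : V) : ind u v w -> ind u w v.
Proof. by move=> h a b c e; have [] := h a c b; [rewrite addrAC|]. Qed.

Lemma indE1 {K : unitRingType} {V : lmodType K} (u v w : V) k :
  ind u v w -> ind u (v - k *: u) w.
Proof.
move=> h a b c e.
have e' : (a - b * k) *: u + b *: v + c *: w = 0.
  rewrite -e scalerBr scalerA scalerBl; congr (_ + _).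
  by rewrite -addrA (addrC (- _)).
have [h1 h2 h3] := h _ _ _ e'.
by split=> //; move: h1; rewrite h2 mul0r subr0.
Qed.

Lemma indE2 {K : unitRingType} {V : lmodType K} (u v w : V) k :
  ind u v w -> ind u v (w - k *: u).
Proof.
move=> h; apply: indP23; apply: indE1; exact: indP23.
Qed.

Lemma indE3 {K : unitRingType} {V : lmodType K} (u v w : V) k :
  ind u v w -> ind u v (w - k *: v).
Proof.
move=> h; apply: indP12; apply: indE2; exact: indP12.
Qed.

Lemma indZ3 {K : unitRingType} {V : lmodType K} (u v : V) : ind u v 0 -> False.
Proof.
move=> h; have e : 0 *: u + 0 *: v + 1 *: (0:V) = 0 by rewrite !scale0r !scaler0 !addr0.
have [_ _] := h _ _ _ e.
by move/eqP; rewrite oner_eq0.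
Qed.

Lemma indKb {K : unitRingType} {V : lmodType K} (hK : division_ring K) (x y z b : V) p q :
  ind x y z -> y = p *: b -> z = q *: b -> False.
Proof.
move=> h ey ez.
have [p0|p0] := pselect (p = 0).
  apply: (@indZ3 _ _ x z); apply: indP23; by rewrite ey p0 scale0r in h.
apply: (@indZ3 _ _ x y); have := indE3 (k := q * p^-1) h.
by rewrite ey ez scalerA -mulrA unitP // mulr1 subrr.
Qed.

Lemma elimab {K : unitRingType} {V : lmodType K} (hK : division_ring K) (a b : V)
  u1 u2 v1 v2 : u1 <> 0 ->
  (v1 *: a + v2 *: b) - (v1 * u1^-1) *: (u1 *: a + u2 *: b)
  = (v2 - v1 * u1^-1 * u2) *: b.
Proof.
move=> hu; rewrite scalerDr !scalerA -mulrA unitP // mulr1 scalerBl opprD addrACA subrr add0r.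
by [].
Qed.

Lemma indCore {K : unitRingType} {V : lmodType K} (hK : division_ring K) (a b u v w : V)
  u1 u2 v1 v2 w1 w2 : ind u v w -> u1 <> 0 ->
  u = u1 *: a + u2 *: b -> v = v1 *: a + v2 *: b -> w = w1 *: a + w2 *: b -> False.
Proof.
move=> h hu eu ev ew.
have h2 := indE2 (k := w1 * u1^-1) (indE1 (k := v1 * u1^-1) h).
apply: (indKb hK h2).
  by rewrite ev eu elimab.
by rewrite ew eu elimab.
Qed.

Lemma span2_false {K : unitRingType} {V : lmodType K} (hK : division_ring K) (a b : V) :
  dim_gt2 V -> (forall z : V, exists s t, z = s *: a + t *: b) -> False.
Proof.
move=> [u [v [w h]]] sp.
have [u1 [u2 eu]] := sp u; have [v1 [v2 ev]] := sp v; have [w1 [w2 ew]] := sp w.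
have [hu|hu] := pselect (u1 = 0); last exact: (indCore hK h hu eu ev ew).
have [hv|hv] := pselect (v1 = 0); last exact: (indCore hK (indP12 h) hv ev eu ew).
have [hw|hw] := pselect (w1 = 0); last exact: (indCore hK (indP12 (indP23 h)) hw ew eu ev).
apply: (indKb hK (indP12 (indP23 h))).
  by rewrite eu hu scale0r add0r.
by rewrite ev hv scale0r add0r.
Qed.


Lemma lin0 {K : unitRingType} {V : lmodType K} (Y : set V) (f : V -> V) :
  subspace Y -> (forall (a : K) x y, Y x -> Y y -> f (a *: x + y) = a *: f x + f y) ->
  f 0 = 0.
Proof.
move=> sY lf; have := lf 1 0 0 (sub0 sY) (sub0 sY).
rewrite !scale1r addr0 => /(congr1 (fun t => t - f 0)) /=.
by rewrite subrr addrK => <-.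
Qed.

Lemma linZ {K : unitRingType} {V : lmodType K} (Y : set V) (f : V -> V) c x :
  subspace Y -> (forall (a : K) x y, Y x -> Y y -> f (a *: x + y) = a *: f x + f y) ->
  Y x -> f (c *: x) = c *: f x.
Proof.
move=> sY lf Yx; have := lf c x 0 Yx (sub0 sY).
by rewrite addr0 (lin0 sY lf) addr0.
Qed.

Lemma G1 {K : unitRingType} {V : lmodType K} (hK : division_ring K) (Y : set V) y0 :
  dim_gt2 V -> Gset Y -> Y y0 -> (forall y, Y y -> exists c, y = c *: y0) -> False.
Proof.
move=> d [sY [f [lf [inj sur]]]] Yy0 hy.
apply: (span2_false hK (a := f y0) (b := y0) d) => z.
have [x [Yx Yfx]] := sur z.
have [c ex] := hy x Yx; have [d' ed] := hy _ Yfx.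
exists c, (- d'); rewrite scaleNr -ed -(linZ _ sY lf Yy0) -ex.
by rewrite opprB addrC subrK.
Qed.

Lemma G2 {K : unitRingType} {V : lmodType K} (hK : division_ring K) (Y : set V) m0 :
  dim_gt2 V -> Gset Y -> exists w, ~ spanl Y m0 w.
Proof.
move=> d GY; apply: contrapT => hn.
have hall : forall w, spanl Y m0 w.
  by move=> w; apply: contrapT => hw; apply: hn; exists w.
have GY' := GY; case: GY' => sY [f [lf [inj sur]]].
have [[x1 [Yx1 [c1 [y1 [Yy1 [ef c10]]]]]] | hno] :=
  pselect (exists x1, Y x1 /\ exists c1 y1, Y y1 /\ f x1 = c1 *: m0 + y1 /\ c1 <> 0).
  apply: (G1 hK d GY Yx1) => y Yy.
  have [c2 [y2 [Yy2 efy]]] := hall (f y).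
  exists (c2 * c1^-1).
  have Yz : Y (- (c2 * c1^-1) *: x1 + y).
    by case: sY => _ h; apply: h.
  have := inj _ Yz.
  rewrite (lf _ _ _ Yx1 Yy) ef efy scalerDr scalerA mulNr -mulrA unitP // mulr1.
  rewrite !scaleNr addrAC addKr addrC.
  move=> /(_ (subD sY (subN sY (subZ _ sY Yy1)) Yy2)) /eqP.
  by rewrite addrC subr_eq0 => /eqP.
apply: (G1 hK d GY (sub0 sY)) => y Yy; exists 0; rewrite scaler0.
have [c2 [y2 [Yy2 efy]]] := hall (f y).
have [c20|c20] := pselect (c2 = 0).
  by apply: inj => //; rewrite efy c20 scale0r add0r.
by exfalso; apply: hno; exists y; split=> //; exists c2, y2.
Qed.


Lemma hyper_exists {K : unitRingType} {V : lmodType K} (hK : division_ring K) (A : set V) w :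
  subspace A -> ~ A w ->
  exists H, [/\ subspace H, A `<=` H, ~ H w & forall z, spanl H w z].
Proof.
move=> sA nAw.
pose P := [set H : set V | H = set0 \/ [/\ subspace H, A `<=` H & ~ H w]].
have [H0 [PH0 maxH0]] : exists A0, P A0 /\ forall B, A0 `<` B -> ~ P B.
  apply: Zorn_bigcup => F FP Ftot.
  have [[H1 FH1 [x1 H1x1]]|hno] := pselect (exists2 H, F H & exists x, H x).
    have nz : forall H, F H -> forall x, H x -> [/\ subspace H, A `<=` H & ~ H w].
      move=> H FH x Hx; case: (FP H FH) => // eH; by rewrite eH in Hx.
    right; have [sH1 AH1 _] := nz _ FH1 _ H1x1; split.
    - split; first by exists H1 => //; exact: sub0.
      move=> a x y [Hx FHx xHx] [Hy FHy yHy].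
      have [sHx _ _] := nz _ FHx _ xHx; have [sHy _ _] := nz _ FHy _ yHy.
      case: (Ftot _ _ FHx FHy) => sub.
        by exists Hy => //; case: sHy => _; apply => //; apply: sub.
      by exists Hx => //; case: sHx => _; apply => //; apply: sub.
    - by move=> a Aa; exists H1 => //; apply: AH1.
    - by move=> [H FH Hw]; have [_ _] := nz _ FH _ Hw; apply.
  left; apply/seteqP; split=> // x [H FH Hx]; apply: hno; exists H => //; by exists x.
case: PH0 => [eH0|[sH AH nHw]].
  exfalso; apply: (maxH0 A); last by right; split.
  rewrite eH0; split=> //; move=> h; have := h 0 (sub0 sA); done.
exists H0; split=> // z.
have [Hz|nHz] := pselect (H0 z).
  by exists 0, z; rewrite scale0r add0r.
have sB := spanl_sub z sH.
have Bw : spanl H0 z w.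
  apply: contrapT => nBw; apply: (maxH0 (spanl H0 z)).
    split; first by move=> x; apply: spanl_in.
    by move=> h; apply: nHz; apply: h; apply: spanl_w.
  right; split=> // a Aa; apply: spanl_in => //; exact: AH.
case: Bw => c [h [Hh ew]].
have c0 : c <> 0 by move=> c0; apply: nHw; rewrite ew c0 scale0r add0r.
exists c^-1, (- (c^-1 *: h)); split; first by apply: subN => //; apply: subZ.
by rewrite ew scalerDr scaleK' // addrK.
Qed.

Lemma functional {K : unitRingType} {V : lmodType K} (hK : division_ring K) (A : set V) w :
  subspace A -> ~ A w ->
  exists lam : V -> K, [/\ (forall a x y, lam (a *: x + y) = a * lam x + lam y),
    (forall x, A x -> lam x = 0) & lam w = 1].
Proof.
move=> sA nAw.
have [H [sH AH nHw hsp]] := hyper_exists hK sA nAw.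
have uniq : forall c1 c2 h1 h2, H h1 -> H h2 -> c1 *: w + h1 = c2 *: w + h2 -> c1 = c2.
  move=> c1 c2 h1 h2 Hh1 Hh2 e; apply: contrapT => ne.
  have ne' : c1 - c2 <> 0 by move=> /eqP; rewrite subr_eq0 => /eqP.
  apply: nHw.
  have e2 : (c1 - c2) *: w = h2 - h1.
    move: e => /(congr1 (fun t => t - h1 - c2 *: w)) /=.
    rewrite addrK scalerBl => ->.
    by rewrite addrAC [c2 *: w + h2]addrC addrK.
  have -> : w = (c1 - c2)^-1 *: (h2 - h1) by rewrite -e2 scaleK'.
  by apply: subZ => //; apply: subB.
pose lam z := projT1 (cid (hsp z)).
have lamP : forall z, exists h, H h /\ z = lam z *: w + h.
  by move=> z; rewrite /lam; case: (cid (hsp z)) => c /= [h [Hh e]]; exists h.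
exists lam; split.
- move=> a x y.
  have [h1 [Hh1 e1]] := lamP x; have [h2 [Hh2 e2]] := lamP y.
  have [h3 [Hh3 e3]] := lamP (a *: x + y).
  apply: (uniq _ _ h3 (a *: h1 + h2)) => //.
    by case: sH => _; apply.
  rewrite -e3 {1}e1 {1}e2 scalerDl scalerDr !scalerA !addrA; congr (_ + _).
  by rewrite addrAC.
- move=> x Ax; have [h [Hh e]] := lamP x.
  apply: (uniq _ _ h x) => //; first exact: AH.
  by rewrite -e scale0r add0r.
- have [h [Hh e]] := lamP w.
  by apply: (uniq _ _ h 0) => //; [exact: sub0|rewrite -e scale1r addr0].
Qed.


Definition isfun {K : unitRingType} {V : lmodType K} (lam : V -> K) :=
  forall a x y, lam (a *: x + y) = a * lam x + lam y.

Lemma funD {K : unitRingType} {V : lmodType K} (lam : V -> K) x y :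
  isfun lam -> lam (x + y) = lam x + lam y.
Proof. by move=> h; have := h 1 x y; rewrite scale1r mul1r. Qed.

Lemma fun0 {K : unitRingType} {V : lmodType K} (lam : V -> K) :
  isfun lam -> lam 0 = 0.
Proof.
move=> h; have := funD 0 0 h; rewrite addr0 => /(congr1 (fun t => t - lam 0)) /=.
by rewrite subrr addrK => <-.
Qed.

Lemma funZ {K : unitRingType} {V : lmodType K} (lam : V -> K) a x :
  isfun lam -> lam (a *: x) = a * lam x.
Proof. by move=> h; have := h a x 0; rewrite addr0 fun0 // addr0. Qed.

Lemma funN {K : unitRingType} {V : lmodType K} (lam : V -> K) x :
  isfun lam -> lam (- x) = - lam x.
Proof. by move=> h; rewrite -scaleN1r funZ // mulN1r. Qed.

Lemma funB {K : unitRingType} {V : lmodType K} (lam : V -> K) x y :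
  isfun lam -> lam (x - y) = lam x - lam y.
Proof. by move=> h; rewrite funD // funN. Qed.

Lemma Gset_inv {K : unitRingType} {V : lmodType K} (X E : set V) (s : V -> V) :
  Gset X -> subspace E ->
  (forall (a : K) x y, s (a *: x + y) = a *: s x + s y) -> (forall x, s (s x) = x) ->
  (forall x, X x -> E (s x)) -> (forall e, E e -> X (s e)) -> Gset E.
Proof.
move=> [sX [f [lf [inj sur]]]] sE ls ss XE EX.
have s0 : s 0 = 0.
  have := ls 1 0 0; rewrite !scale1r addr0 => /(congr1 (fun t => t - s 0)) /=.
  by rewrite subrr addrK => <-.
have sB : forall x y, s (x - y) = s x - s y.
  move=> x y; have := ls (-1) y x; rewrite !scaleN1r addrC => ->; by rewrite addrC.
split=> //; exists (fun e => s (f (s e))); split; [|split].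
- move=> a x y Ex Ey; rewrite ls (lf _ _ _ (EX _ Ex) (EX _ Ey)) ls //.
- move=> x Ex Ef.
  have := EX _ Ef; rewrite ss => /(inj _ (EX _ Ex)) h.
  by rewrite -(ss x) h s0.
- move=> v; have [x [Xx Xfx]] := sur (s v).
  exists (s x); split; first exact: XE.
  by rewrite ss -(ss v) -sB; apply: XE.
Qed.

Lemma sameline {K : unitRingType} {V : lmodType K} (hK : division_ring K)
  (M X E : set V) u v :
  subspace M -> subspace X -> subspace E -> M `<=` X -> M `<=` E ->
  X u -> ~ M u -> (forall e, X e -> exists (a : K) m, M m /\ e = a *: u + m) ->
  E v -> ~ M v -> (forall e, E e -> exists (a : K) m, M m /\ e = a *: v + m) ->
  E u -> X `<=` E /\ E `<=` X.
Proof.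
move=> sM sX sE MX ME Xu nMu hu Ev nMv hv Eu; split.
  move=> x /hu [c [m [Mm ->]]]; apply: subD => //; [exact: subZ|exact: ME].
have [a [m [Mm eu]]] := hv u Eu.
have a0 : a <> 0 by move=> a0; apply: nMu; rewrite eu a0 scale0r add0r.
have Xv : X v.
  have -> : v = a^-1 *: (u - m) by rewrite eu addrK scaleK'.
  by apply: subZ => //; apply: subB => //; apply: MX.
move=> x /hv [c [m' [Mm' ->]]]; apply: subD => //; [exact: subZ|exact: MX].
Qed.

Lemma swap {K : unitRingType} {V : lmodType K} (hK : division_ring K) (M X E : set V) :
  Gset X -> subspace M -> subspace E -> codim1 M X -> codim1 M E -> Gset E.
Proof.
move=> GX sM sE [MX [u [Xu [nMu hu]]]] [ME [v [Ev [nMv hv]]]].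
have sX : subspace X by case: GX.
have [Eu|nEu] := pselect (E u).
  have [XE EX] := sameline hK sM sX sE MX ME Xu nMu hu Ev nMv hv Eu.
  by have -> : E = X by apply/seteqP; split.
have nXv : ~ X v.
  move=> Xv; have [EX XE] := sameline hK sM sE sX ME MX Ev nMv hv Xu nMu hu Xv.
  by apply: nEu; apply: XE.
have [lam [flam lamE lamu]] := functional hK sE nEu.
have [mu [fmu muX muv]] := functional hK sX nXv.
pose rho x := lam x - mu x.
have frho : isfun rho.
  move=> a x y; rewrite /rho flam fmu mulrBr opprD addrACA //.
have [d ed] : exists d, d = v - u by eexists.
have rhod : rho d = -1 - 1.
  rewrite /rho ed !funB // lamu muv (lamE _ Ev) (muX _ Xu) !sub0r subr0.
  by [].
pose s x := x + rho x *: d.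
have ls : forall (a : K) x y, s (a *: x + y) = a *: s x + s y.
  by move=> a x y; rewrite /s frho scalerDl [a *: (x + _)]scalerDr scalerA addrACA.
have ss : forall x, s (s x) = x.
  move=> x; rewrite /s.
  have -> : rho (x + rho x *: d) = rho x + rho x * rho d.
    by rewrite addrC frho addrC.
  by rewrite rhod mulrBr mulrN1 -addrA -scalerDl mulr1 addNKr subrr scale0r addr0.
apply: (Gset_inv GX sE ls ss).
- move=> x Xx; have [c [m [Mm ex]]] := hu x Xx.
  have rx : rho x = c.
    rewrite /rho (muX _ Xx) subr0 ex flam lamu mulr1 (lamE _ (ME _ Mm)) addr0 //.
  rewrite /s rx ex ed.
  have -> : c *: u + m + c *: (v - u) = c *: v + m by rewrite scalerBr addrC addrA subrK.
  by apply: subD => //; [exact: subZ|exact: ME].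
- move=> e Ee; have [c [m [Mm ex]]] := hv e Ee.
  have rx : rho e = - c.
    rewrite /rho (lamE _ Ee) sub0r ex fmu muv mulr1 (muX _ (MX _ Mm)) addr0 //.
  rewrite /s rx ex ed.
  have -> : c *: v + m + (- c) *: (v - u) = c *: u + m.
    by rewrite scaleNr scalerBr opprB addrC addrA subrK.
  by apply: subD => //; [exact: subZ|exact: MX].
Qed.


Lemma addspC {K : unitRingType} {V : lmodType K} (X Y : set V) : addsp X Y = addsp Y X.
Proof.
by apply/seteqP; split=> z [x [y [Xx [Yy ->]]]]; exists y, x; rewrite addrC.
Qed.

Lemma addsp_sub {K : unitRingType} {V : lmodType K} (X Y : set V) :
  subspace X -> subspace Y -> subspace (addsp X Y).
Proof.
move=> sX sY; split; first by exists 0, 0; rewrite addr0; split; [exact: sub0|split=> //; exact: sub0].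
move=> a _ _ [x [y [Xx [Yy ->]]]] [x' [y' [Xx' [Yy' ->]]]].
exists (a *: x + x'), (a *: y + y'); split; first by case: sX => _; apply.
split; first by case: sY => _; apply.
by rewrite scalerDr addrACA.
Qed.

Lemma addsp_l {K : unitRingType} {V : lmodType K} (X Y : set V) :
  subspace Y -> X `<=` addsp X Y.
Proof. by move=> sY x Xx; exists x, 0; rewrite addr0; split=> //; split=> //; exact: sub0. Qed.

Lemma addsp_r {K : unitRingType} {V : lmodType K} (X Y : set V) :
  subspace X -> Y `<=` addsp X Y.
Proof. by move=> sX y Yy; exists 0, y; rewrite add0r; split=> //; exact: sub0. Qed.

Lemma addsp_le {K : unitRingType} {V : lmodType K} (X Y N : set V) :
  subspace N -> X `<=` N -> Y `<=` N -> addsp X Y `<=` N.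
Proof. by move=> sN XN YN _ [x [y [Xx [Yy ->]]]]; apply: subD => //; [exact: XN|exact: YN]. Qed.

Lemma notsub {K : unitRingType} {V : lmodType K} (Y A B : set V) :
  subspace Y -> codim1 Y (addsp A B) -> A `<=` Y -> B `<=` Y -> False.
Proof.
move=> sY [_ [v [Sv [nYv _]]]] AY BY; apply: nYv.
by apply: (addsp_le sY AY BY).
Qed.

Lemma adj_nsub {K : unitRingType} {V : lmodType K} (X Z : set V) :
  subspace X -> subspace Z -> adjacent X Z -> ~ (Z `<=` X) /\ ~ (X `<=` Z).
Proof.
move=> sX sZ [h1 h2]; split=> sub.
  by apply: (notsub sX h1).
by apply: (notsub sZ h2).
Qed.

Lemma adj_cap {K : unitRingType} {V : lmodType K} (X Z : set V) :
  subspace X -> subspace Z -> codim1 Z (addsp X Z) -> codim1 (X `&` Z) X.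
Proof.
move=> sX sZ [ZS [v [Sv [nZv hv]]]].
case: Sv => x [z [Xx [Zz ev]]].
have nZx : ~ Z x by move=> Zx; apply: nZv; rewrite ev; apply: subD.
split; first by move=> y [].
exists x; split=> //; split; first by case.
move=> x' Xx'.
have [a [z' [Zz' e]]] := hv x' (addsp_l sZ Xx').
exists a, (x' - a *: x); split; last by rewrite addrC subrK.
split; first by apply: subB => //; apply: subZ.
have -> : x' - a *: x = a *: z + z' by rewrite e ev scalerDr addrAC [a *: x + _]addrC addrK.
by case: sZ => _; apply.
Qed.

Lemma hyp_incl {K : unitRingType} {V : lmodType K} (hK : division_ring K) (H1 H2 Y : set V) :
  subspace H1 -> subspace H2 -> H1 `<=` H2 -> codim1 H1 Y -> codim1 H2 Y -> H2 `<=` H1.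
Proof.
move=> s1 s2 H12 [H1Y [v [Yv [nv hv]]]] [H2Y [w [Yw [nw hw]]]] h H2h.
have [a [m [H1m eh]]] := hv h (H2Y _ H2h).
have [a0|a0] := pselect (a = 0); first by rewrite eh a0 scale0r add0r.
exfalso; apply: nw.
have H2v : H2 v.
  have -> : v = a^-1 *: (h - m) by rewrite eh addrK scaleK'.
  by apply: subZ => //; apply: subB => //; apply: H12.
have [b [m' [H1m' ->]]] := hv w Yw.
by apply: subD => //; [exact: subZ|exact: H12].
Qed.

Lemma star_adj {K : unitRingType} {V : lmodType K} (hK : division_ring K) (M E1 E2 : set V) :
  subspace M -> subspace E1 -> subspace E2 -> codim1 M E1 -> codim1 M E2 -> E1 <> E2 ->
  codim1 E1 (addsp E1 E2).
Proof.
move=> sM s1 s2 [ME1 [v1 [E1v1 [nMv1 h1]]]] [ME2 [v2 [E2v2 [nMv2 h2]]]] ne.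
have nE1v2 : ~ E1 v2.
  move=> E1v2; apply: ne.
  have [a b] := sameline hK sM s2 s1 ME2 ME1 E2v2 nMv2 h2 E1v1 nMv1 h1 E1v2.
  by apply/seteqP; split.
split; first exact: addsp_l.
exists v2; split; first exact: addsp_r.
split=> // _ [e1 [e2 [E1e1 [E2e2 ->]]]].
have [c [m [Mm ->]]] := h2 e2 E2e2.
exists c, (e1 + m); split; first by apply: subD => //; apply: ME1.
by rewrite addrCA.
Qed.

Lemma star_clique {K : unitRingType} {V : lmodType K} (hK : division_ring K) (M : set V) :
  star_base M -> adj_clique (star M).
Proof.
move=> [sM [X [GX cMX]]]; split.
  by move=> E [sE cME]; apply: (swap hK GX sM sE cMX cME).
move=> E1 E2 [s1 c1] [s2 c2] ne; split.
  exact: (star_adj hK sM s1 s2 c1 c2 ne).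
rewrite addspC; apply: (star_adj hK sM s2 s1 c2 c1) => e; exact: ne.
Qed.

Lemma top_sum {K : unitRingType} {V : lmodType K} (hK : division_ring K) (N E1 E2 : set V) :
  subspace N -> subspace E1 -> subspace E2 -> codim1 E1 N -> codim1 E2 N -> E1 <> E2 ->
  addsp E1 E2 = N.
Proof.
move=> sN s1 s2 c1 c2 ne; apply/seteqP; split.
  by apply: addsp_le => //; [case: c1|case: c2].
have [[p E2p nE1p]|hno] := pselect (exists2 p, E2 p & ~ E1 p).
  move=> n Nn.
  have N2 : E2 `<=` N by case: c2.
  have [c [e [E1e ->]]] := codim1_span hK s1 c1 (N2 _ E2p) nE1p Nn.
  by exists e, (c *: p); split=> //; split; [exact: subZ|rewrite addrC].
exfalso; apply: ne.
have E21 : E2 `<=` E1 by move=> x E2x; apply: contrapT => nx; apply: hno; exists x.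
have := hyp_incl hK s2 s1 E21 c2 c1.
by move=> E12; apply/seteqP; split.
Qed.

Lemma top_clique {K : unitRingType} {V : lmodType K} (hK : division_ring K) (N : set V) :
  top_base N -> adj_clique (top N).
Proof.
move=> [sN [X [GX cXN]]]; have sX : subspace X by case: GX.
split.
  move=> E [sE cEN].
  have [eEX|neEX] := pselect (E = X); first by rewrite eEX.
  have hs := top_sum hK sN sX sE cXN cEN (nesym neEX).
  have cE : codim1 E (addsp X E) by rewrite hs.
  have cX : codim1 X (addsp E X) by rewrite addspC hs.
  have c1 := adj_cap sX sE cE.
  have c2 := adj_cap sE sX cX.
  rewrite setIC in c2.
  apply: (swap hK GX _ sE c1 c2).
  split; first by split; [exact: sub0|exact: sub0].
  by move=> a x y [Xx Ex] [Xy Ey]; split; case: sX sE => [_ hX] [_ hE]; [apply: hX|apply: hE].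
move=> E1 E2 [s1 c1] [s2 c2] ne.
by rewrite /adjacent (top_sum hK sN s1 s2 c1 c2 ne).
Qed.


Lemma lin_eq {K : unitRingType} {V : lmodType K} (y0 x e : V) (c d : K) :
  c *: y0 + x = d *: y0 + e -> (d - c) *: y0 = x - e.
Proof.
move=> /(congr1 (fun t => t - c *: y0 - e)) /=.
rewrite [c *: y0 + x]addrC addrK => ->.
by rewrite scalerBl addrAC addrK.
Qed.

Lemma kerhyp {K : unitRingType} {V : lmodType K} (N : set V) (lam : V -> K) n :
  subspace N -> isfun lam -> N n -> lam n = 1 ->
  top N [set e | N e /\ lam e = 0].
Proof.
move=> sN fl Nn ln; split.
  split; first by split; [exact: sub0|exact: fun0].
  move=> a x y [Nx lx] [Ny ly]; split; first by case: sN => _; apply.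
  by rewrite fl lx ly mulr0 addr0.
split; first by move=> e [].
exists n; split=> //; split.
  by move=> [_]; rewrite ln => /eqP; rewrite oner_eq0.
move=> e Ne; exists (lam e), (e - lam e *: n); split; last by rewrite addrC subrK.
split; first by apply: subB => //; apply: subZ.
by rewrite funB // funZ // ln mulr1 subrr.
Qed.

Lemma star_max {K : unitRingType} {V : lmodType K} (hK : division_ring K) (M : set V) C' :
  dim_gt2 V -> star_base M -> adj_clique C' -> star M `<=` C' -> C' `<=` star M.
Proof.
move=> dV [sM [X [GX cMX]]] [CG Cadj] sub Y CY; apply: contrapT => nY.
have GY := CG Y CY; have sY : subspace Y by case: GY.
have sX : subspace X by case: GX.
have adjE : forall E, star M E -> adjacent Y E.
  move=> E hE; apply: Cadj => //; first exact: sub.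
  by move=> eYE; apply: nY; rewrite eYE.
have hX : star M X by [].
have MX : M `<=` X by case: cMX.
have [MY|nMY] := pselect (M `<=` Y).
  have [YM|nYM] := pselect (Y `<=` M).
    have [_ h] := adj_nsub sY sX (adjE X hX).
    by apply: h => y /YM /MX.
  have [y1 Yy1 nMy1] : exists2 y1, Y y1 & ~ M y1.
    by apply: contrapT => hn; apply: nYM => y Yy; apply: contrapT => nm; apply: hn; exists y.
  have hE : star M (spanl M y1) by split; [exact: spanl_sub|exact: codim1_spanl].
  have [h _] := adj_nsub sY (spanl_sub y1 sM) (adjE _ hE).
  apply: h => _ [c [m [Mm ->]]]; apply: subD => //; [exact: subZ|exact: MY].
have [m0 Mm0 nYm0] : exists2 m0, M m0 & ~ Y m0.
  by apply: contrapT => hn; apply: nMY => y Yy; apply: contrapT => nm; apply: hn; exists y.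
have [cYX _] := adjE X hX.
have MS : M `<=` spanl Y m0.
  move=> m Mm.
  exact: (codim1_span hK sY cYX (addsp_r sY (MX _ Mm0)) nYm0 (addsp_r sY (MX _ Mm))).
have [w nw] := G2 hK m0 dV GY.
have nMw : ~ M w by move=> /MS.
have hE : star M (spanl M w) by split; [exact: spanl_sub|exact: codim1_spanl].
have [cYE _] := adjE _ hE.
apply: nw; apply: (codim1_span hK sY cYE (addsp_r sY (spanl_in w sM Mm0)) nYm0).
exact: (addsp_r sY (spanl_w w sM)).
Qed.

Lemma top_max {K : unitRingType} {V : lmodType K} (hK : division_ring K) (N : set V) C' :
  dim_gt2 V -> top_base N -> adj_clique C' -> top N `<=` C' -> C' `<=` top N.
Proof.
move=> dV [sN [X [GX cXN]]] [CG Cadj] sub Y CY; apply: contrapT => nY.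
have GY := CG Y CY; have sY : subspace Y by case: GY.
have sX : subspace X by case: GX.
have adjE : forall E, top N E -> adjacent Y E.
  move=> E hE; apply: Cadj => //; first exact: sub.
  by move=> eYE; apply: nY; rewrite eYE.
have hX : top N X by [].
have XN : X `<=` N by case: cXN.
have [YN|nYN] := pselect (Y `<=` N).
  have [NY|nNY] := pselect (N `<=` Y).
    have [h _] := adj_nsub sY sX (adjE X hX).
    by apply: h => y Xy; apply: NY; apply: XN.
  have [n Nn nYn] : exists2 n, N n & ~ Y n.
    by apply: contrapT => hn; apply: nNY => y Yy; apply: contrapT => nm; apply: hn; exists y.
  have [lam [flam lamY lamn]] := functional hK sY nYn.
  have hE := kerhyp sN flam Nn lamn.
  have sE : subspace [set e | N e /\ lam e = 0] by case: hE.
  have [_ h] := adj_nsub sY sE (adjE _ hE).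
  by apply: h => y Yy; split; [exact: YN|exact: lamY].
have [y0 Yy0 nNy0] : exists2 y0, Y y0 & ~ N y0.
  by apply: contrapT => hn; apply: nYN => y Yy; apply: contrapT => nm; apply: hn; exists y.
have [y Yy ny] : exists2 y, Y y & forall c, y <> c *: y0.
  apply: contrapT => hn; apply: (G1 hK dV GY Yy0) => y Yy.
  apply: contrapT => hc; apply: hn; exists y => // c ec; apply: hc; by exists c.
have [_ cXYX] := adjE X hX.
have nXy0 : ~ X y0 by move=> /XN.
have [c [x [Xx ey]]] := codim1_span hK sX cXYX (addsp_l sX Yy0) nXy0 (addsp_l sX Yy).
have s0 : subspace [set (0 : V)].
  by split=> // a _ _ -> ->; rewrite scaler0 addr0.
have nx0 : ~ [set (0 : V)] x by move=> /= x0; apply: (ny c); rewrite ey x0 addr0.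
have [lam [flam _ lamx]] := functional hK s0 nx0.
have hE := kerhyp sN flam (XN _ Xx) lamx.
have sE : subspace [set e | N e /\ lam e = 0] by case: hE.
have [_ cE] := adjE _ hE.
have nEy0 : ~ [set e | N e /\ lam e = 0] y0 by move=> [].
have [d [e [[Ne le] ey']]] := codim1_span hK sE cE (addsp_l sE Yy0) nEy0 (addsp_l sE Yy).
have hl := lin_eq (etrans (esym ey) ey').
have [dc|dc] := pselect (d - c = 0).
  move: hl; rewrite dc scale0r => /eqP; rewrite eq_sym subr_eq0 => /eqP xe.
  by move: lamx; rewrite xe le => /eqP; rewrite eq_sym oner_eq0.
apply: nNy0.
have -> : y0 = (d - c)^-1 *: (x - e) by rewrite -hl scaleK'.
by apply: subZ => //; apply: subB => //; apply: XN.
Qed.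


Lemma subI {K : unitRingType} {V : lmodType K} (X Y : set V) :
  subspace X -> subspace Y -> subspace (X `&` Y).
Proof.
move=> sX sY; split; first by split; [exact: sub0|exact: sub0].
by move=> a x y [Xx Yx] [Xy Yy]; split; case: sX sY => [_ hX] [_ hY]; [apply: hX|apply: hY].
Qed.

Lemma dich {K : unitRingType} {V : lmodType K} (hK : division_ring K) (X Y Z : set V) :
  subspace X -> subspace Y -> subspace Z ->
  adjacent X Y -> adjacent X Z -> adjacent Y Z ->
  (X `&` Y `<=` Z) \/ (Z `<=` addsp X Y).
Proof.
move=> sX sY sZ [cXY cYXY] [cXXZ cZXZ] [cYYZ cZYZ].
have cYZ := adj_cap sY sZ cZYZ.
have cXYY : codim1 (Y `&` X) Y by apply: adj_cap => //; rewrite addspC.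
have [[b [Yb Zb] nXb]|hno] := pselect (exists2 b, (Y `&` Z) b & ~ X b).
  right => z Zz.
  have [c [x [Xx ->]]] := codim1_span hK sX cXXZ (addsp_r sX Zb) nXb (addsp_r sX Zz).
  by exists x, (c *: b); split=> //; split; [exact: subZ|rewrite addrC].
left.
have sub : Y `&` Z `<=` Y `&` X.
  by move=> y [Yy Zy]; split=> //; apply: contrapT => nx; apply: hno; exists y.
have := hyp_incl hK (subI sY sZ) (subI sY sX) sub cYZ cXYY.
by move=> h y [Xy Yy]; have [] := h y (conj Yy Xy).
Qed.

Lemma exists_not_sub {T} (A B : set T) : ~ (A `<=` B) -> exists2 x, A x & ~ B x.
Proof.
by move=> h; apply: contrapT => hn; apply: h => y Ay; apply: contrapT => nm; apply: hn; exists y.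
Qed.

Lemma forward {K : unitRingType} {V : lmodType K} (hK : division_ring K) (C : set (set V)) :
  dim_gt2 V -> (exists X : set V, Gset X) -> maximal_adj_clique C ->
  (exists M, star_base M /\ C = star M) \/ (exists N, top_base N /\ C = top N).
Proof.
move=> dV [X0 GX0] [[CG Cadj] cmax].
have [X CX] : exists X, C X.
  apply: contrapT => hn; exfalso.
  have cl : adj_clique [set X0].
    by split; [move=> _ ->|move=> _ _ -> -> h].
  have := cmax _ cl; move=> /(_ (fun Z CZ => False_ind _ (hn (ex_intro _ Z CZ)))) e.
  by apply: hn; exists X0; rewrite -e.
have GX := CG X CX; have sX : subspace X by case: GX.
have [[Y CY nYX]|hno] := pselect (exists2 Y, C Y & Y <> X); last first.
  have [w nw] := G2 hK 0 dV GX.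
  have nXw : ~ X w by move=> Xw; apply: nw; apply: spanl_in.
  have tb : top_base (spanl X w).
    by split; [exact: spanl_sub|exists X; split=> //; exact: codim1_spanl].
  right; exists (spanl X w); split=> //.
  apply: esym; apply: cmax; first exact: top_clique.
  move=> Z CZ; have -> : Z = X by apply: contrapT => ne; apply: hno; exists Z.
  by split=> //; exact: codim1_spanl.
have GY := CG Y CY; have sY : subspace Y by case: GY.
have adjXY := Cadj X Y CX CY (nesym nYX).
have [cXN cYN] := adjXY.
have cMX := adj_cap sX sY cYN.
pose M := X `&` Y; pose N := addsp X Y.
have sM : subspace M by apply: subI.
have sN : subspace N by apply: addsp_sub.
have dichZ : forall Z, C Z -> M `<=` Z \/ Z `<=` N.
  move=> Z CZ.
  have [->|nZX] := pselect (Z = X); first by left => ? [].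
  have [->|nZY] := pselect (Z = Y); first by left => ? [].
  have sZ : subspace Z by case: (CG Z CZ).
  apply: (dich hK sX sY sZ adjXY); apply: Cadj => //; apply: nesym => //.
have [allM|] := pselect (forall Z, C Z -> M `<=` Z).
  have sb : star_base M by split=> //; exists X; split.
  left; exists M; split=> //.
  apply: esym; apply: cmax; first exact: star_clique.
  move=> Z CZ; have sZ : subspace Z by case: (CG Z CZ).
  split=> //.
  have [->|nZX] := pselect (Z = X); first done.
  have [cXXZ cZXZ] := Cadj X Z CX CZ (nesym nZX).
  have c1 := adj_cap sX sZ cZXZ.
  have MXZ : M `<=` X `&` Z by move=> m Mm; split; [case: Mm|exact: allM].
  have h := hyp_incl hK sM (subI sX sZ) MXZ cMX c1.
  have c2 : codim1 (Z `&` X) Z by apply: adj_cap => //; rewrite addspC.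
  have -> : M = Z `&` X.
    apply/seteqP; split; first by move=> m Mm; have [] := MXZ m Mm; split.
    by move=> z [Zz Xz]; apply: h.
  done.
move=> hnall.
have [Z1 CZ1 nMZ1] : exists2 Z1, C Z1 & ~ (M `<=` Z1).
  apply: contrapT => hn; apply: hnall => Z CZ; apply: contrapT => hm; apply: hn; by exists Z.
have sZ1 : subspace Z1 by case: (CG Z1 CZ1).
have Z1N : Z1 `<=` N by case: (dichZ Z1 CZ1).
have MX : M `<=` X by move=> ? [].
have XN : X `<=` N by apply: addsp_l.
have allN : forall Z, C Z -> Z `<=` N.
  move=> Z CZ; have [MZ|//] := dichZ Z CZ.
  apply: contrapT => nZN; have [z0 Zz0 nNz0] := exists_not_sub nZN.
  have sZ : subspace Z by case: (CG Z CZ).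
  have nZX : Z <> X by move=> eZ; apply: nNz0; apply: XN; rewrite -eZ.
  have nZ1X : Z1 <> X by move=> eZ; apply: nMZ1; rewrite eZ.
  have nZZ1 : Z <> Z1 by move=> eZ; apply: nMZ1; rewrite -eZ.
  have aXZ := Cadj X Z CX CZ (nesym nZX).
  have aXZ1 := Cadj X Z1 CX CZ1 (nesym nZ1X).
  have aZZ1 := Cadj Z Z1 CZ CZ1 nZZ1.
  have c2 : codim1 (Z `&` X) Z by apply: adj_cap => //; rewrite addspC; case: aXZ.
  have nZXz0 : ~ (Z `&` X) z0 by move=> [_ /XN].
  have [h|h] := dich hK sX sZ sZ1 aXZ aXZ1 aZZ1.
    by apply: nMZ1 => m Mm; apply: h; split; [case: Mm|exact: MZ].
  have [h1 _] := adj_nsub sX sZ1 aXZ1; apply: h1 => z1 Z1z1.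
  have [x [z [Xx [Zz ez1]]]] := h _ Z1z1.
  have [c [w [[Zw Xw] ez]]] := codim1_span hK (subI sZ sX) c2 Zz0 nZXz0 Zz.
  have [c0|c0] := pselect (c = 0).
    by rewrite ez1 ez c0 scale0r add0r; apply: subD.
  exfalso; apply: nNz0.
  have -> : z0 = c^-1 *: (z1 - x - w) by rewrite ez1 ez [x + _]addrC addrK addrK scaleK'.
  apply: subZ => //; apply: subB => //; last exact: XN.
  apply: subB => //; [exact: Z1N|exact: XN].
have tb : top_base N by split=> //; exists X; split.
right; exists N; split=> //.
apply: esym; apply: cmax; first exact: top_clique.
move=> Z CZ; have sZ : subspace Z by case: (CG Z CZ).
split=> //.
have [->|nZX] := pselect (Z = X); first done.
have [cXXZ cZXZ] := Cadj X Z CX CZ (nesym nZX).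
have e : addsp X Z = N.
  apply/seteqP; split; first by apply: addsp_le => //; exact: allN.
  have [XS [p [Sp [nXp _]]]] := cXXZ.
  move=> n Nn.
  have [c [x [Xx ->]]] := codim1_span hK sX cXN (addsp_le sN XN (allN Z CZ) Sp) nXp Nn.
  by apply: subD; [exact: addsp_sub|exact: subZ (addsp_sub sX sZ) Sp|exact: XS].
by rewrite -e.
Qed.


Local Close Scope classical_set_scope.
Local Close Scope ring_scope.

Theorem proposition2p4 (K : unitRingType) (V : lmodType K) :
  division_ring K ->
  dim_gt2 V ->
  (exists X : set V, Gset X) ->
  forall C : set (set V),
    maximal_adj_clique C <->
    ((exists M, star_base M /\ C = star M) \/
     (exists N, top_base N /\ C = top N)).
Proof.
move=> hK dV hG C; split; first exact: forward.
case=> [[M [sb ->]]|[N [tb ->]]].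
  split; first exact: star_clique.
  move=> C' cl sub; apply/seteqP; split=> //; exact: (star_max hK dV sb cl sub).
split; first exact: top_clique.
move=> C' cl sub; apply/seteqP; split=> //; exact: (top_max hK dV tb cl sub).
Qed.
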